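(* Let $r\ge 2$ and $n\ge 3$, and let $\lambda$ be the word morphism on $\{E,N\}$ given by $\lambda(E)=E^{r-1}N$, $\lambda(N)=E^{r-2}N$, and $\theta$ the morphism given by $\theta(E)=E$, $\theta(N)=EN$. Then applying $\lambda$ to the Christoffel word of $\mathcal{D}_n$ yields the Christoffel word of $\mathcal{D}_{n+1}$, and applying $\theta\circ\lambda\circ\theta^{-1}$ to the Christoffel word of $\mathcal{C}_n$ yields the Christoffel word of $\mathcal{C}_{n+1}$.
   Context: Fix an integer $r\ge 2$. Define $c_1=0$, $c_2=1$, $c_n=rc_{n-1}-c_{n-2}$ for $n\ge 3$. For nonnegative integers $a,b$, the maximal Dyck path $\mathcal{P}(a,b)$ is the lattice path from $(0,0)$ to $(a,b)$ using unit north and east steps that never passes strictly above the line segment from $(0,0)$ to $(a,b)$ and is closest to that segment. For $n\ge 3$ let $\mathcal{C}_n=\mathcal{P}(c_{n-1},c_{n-2})$ and $\mathcal{D}_n=\mathcal{P}(c_{n-1}-c_{n-2},c_{n-2})$. The (lower) Christoffel word of such a path is the word over $\{E,N\}$ obtained by reading its steps from $(0,0)$ onward, recording $E$ for each east step and $N$ for each north step. The Christoffel word of $\mathcal{C}_n$ equals $\theta$ applied to the Christoffel word of $\mathcal{D}_n$; $\theta^{-1}$ denotes the inverse of $\theta$ on words in its image (replacing each factor $EN$ coming from an $N$ by $N$). *)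

(* Defs.v *)
From mathcomp Require Import all_boot.
Set Implicit Arguments. Unset Strict Implicit. Unset Printing Implicit Defensive.

(* Steps of a lattice path: E = unit east step, N = unit north step. *)
Inductive step := E | N.

Definition isE (s : step) : bool := if s is E then true else false.
Definition isN (s : step) : bool := if s is N then true else false.

(* The sequence c_1 = 0, c_2 = 1, c_n = r c_(n-1) - c_(n-2).
   cpair r k = (c_(k+1), c_(k+2)).  For r >= 2 the sequence is nondecreasing,
   so truncated subtraction on nat is exact. *)
Fixpoint cpair (r k : nat) : nat * nat :=
  match k with
  | 0 => (0, 1)
  | k'.+1 => let '(a, b) := cpair r k' in (b, r * b - a)
  end.

(* c r n = c_n for n >= 1 (c r 0 is an unused junk value). *)
Definition c (r n : nat) : nat := (cpair r n.-1).1.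

Definition xcoord (w : seq step) (k : nat) : nat := count isE (take k w).
Definition ycoord (w : seq step) (k : nat) : nat := count isN (take k w).

(* w is a lattice path from (0,0) to (a,b) never passing strictly above the
   segment from (0,0) to (a,b). *)
Definition below_path (a b : nat) (w : seq step) : Prop :=
  count isE w = a /\ count isN w = b /\
  forall k, k <= size w -> ycoord w k * a <= xcoord w k * b.

(* w is the maximal Dyck path P(a,b): among all such paths it is the one
   closest to the segment, i.e. it weakly dominates every other one. *)
Definition maximal_dyck (a b : nat) (w : seq step) : Prop :=
  below_path a b w /\
  forall w', below_path a b w' -> forall k, ycoord w' k <= ycoord w k.

Definition is_christoffel_C (r n : nat) (w : seq step) : Prop :=
  maximal_dyck (c r n.-1) (c r n.-2) w.
Definition is_christoffel_D (r n : nat) (w : seq step) : Prop :=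
  maximal_dyck (c r n.-1 - c r n.-2) (c r n.-2) w.

Definition morph (f : step -> seq step) (w : seq step) : seq step :=
  flatten (map f w).

Definition lambda_img (r : nat) (s : step) : seq step :=
  match s with
  | E => rcons (nseq r.-1 E) N
  | N => rcons (nseq r.-2 E) N
  end.
Definition lambda (r : nat) := morph (lambda_img r).

Definition theta_img (s : step) : seq step :=
  match s with E => [:: E] | N => [:: E; N] end.
Definition theta := morph theta_img.

(* Main.v *)
Require Import Defs.
From mathcomp Require Import all_boot.
From mathcomp Require Import zify.

Definition inv (a b : nat) (p : seq step) :=
  count isN p * a <= count isE p * b /\ count isE p * b < count isN p * a + a + b.
Definition good a b w :=
  count isE w = a /\ count isN w = b /\ forall p s, w = p ++ s -> inv a b p.

Lemma countEN w : count isE w + count isN w = size w.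
Proof. elim: w => //= -[] w IH /=; lia. Qed.

Lemma good_maximal a b w : good a b w -> maximal_dyck a b w.
Proof.
move=> [hE [hN hp]].
have hsz : size w = a + b by rewrite -countEN hE hN.
have hk : forall k, inv a b (take k w).
  by move=> k; apply: (hp _ (drop k w)); rewrite cat_take_drop.
split.
  split=> //; split=> // k _; rewrite /ycoord /xcoord; by case: (hk k).
move=> w' [hE' [hN' hb']] k.
rewrite /ycoord.
have hsz' : size w' = a + b by rewrite -countEN hE' hN'.
case: (leqP (size w) k) => hks.
  rewrite (@take_oversize _ k w hks) hN -hN'.
  by rewrite -{2}(cat_take_drop k w') count_cat leq_addr.
have hk' : k <= size w' by rewrite hsz' -hsz ltnW.
have := hb' k hk'.
rewrite /ycoord /xcoord.
have := countEN (take k w'); have := countEN (take k w).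
rewrite !size_take hsz' -hsz hks.
case: (hk k) => h1 h2 e1 e2 h3.
nia.
Qed.

Lemma eq_by_ycoord w1 w2 : size w1 = size w2 ->
  (forall k, ycoord w1 k = ycoord w2 k) -> w1 = w2.
Proof.
elim: w1 w2 => [|l1 t1 IH] [|l2 t2] //= [hs] hy.
have h1 := hy 1. rewrite /ycoord /= !take0 in h1.
have e : l1 = l2 by move: h1; case: (l1); case: (l2).
subst l2; congr (_ :: _); apply: IH => // k.
have := hy k.+1; rewrite /ycoord /= => /eqP; rewrite eqn_add2l => /eqP.
done.
Qed.

Lemma maximal_unique a b w1 w2 :
  maximal_dyck a b w1 -> maximal_dyck a b w2 -> w1 = w2.
Proof.
move=> [b1 d1] [b2 d2]; apply: eq_by_ycoord.
  case: b1 => e1 [n1 _]; case: b2 => e2 [n2 _].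
  by rewrite -!countEN e1 n1 e2 n2.
by move=> k; apply/eqP; rewrite eqn_leq (d2 _ b1) (d1 _ b2).
Qed.

Fixpoint gen (a b fuel x y : nat) : seq step :=
  match fuel with
  | 0 => [::]
  | f.+1 => if y.+1 * a <= x * b then N :: gen a b f x y.+1
            else E :: gen a b f x.+1 y
  end.

Lemma gen_size a b f x y : size (gen a b f x y) = f.
Proof. by elim: f x y => //= f IH x y; case: ifP => _ /=; rewrite IH. Qed.

Lemma gen_inv a b f x y : y*a <= x*b -> x*b < y*a + a + b ->
  forall p s, gen a b f x y = p ++ s ->
  (y + count isN p) * a <= (x + count isE p) * b /\
  (x + count isE p) * b < (y + count isN p) * a + a + b.
Proof.
elim: f x y => [|f IH] x y h1 h2 p s /=.
  by case: p => //= _; rewrite !addn0.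
case: ifP => hc; (case: p => [|l p] /=; [by move=> _; rewrite !addn0|]);
  case=> <- hs /=.
  have [] := IH x y.+1 hc _ p s hs; first by nia.
  move=> h3 h4; split; nia.
have [] := IH x.+1 y _ _ p s hs; [nia|nia|].
move=> h3 h4; split; nia.
Qed.

Lemma exists_good a b : 0 < a + b -> exists w, good a b w.
Proof.
move=> hab.
have hp := @gen_inv a b (a+b) 0 0 (leqnn 0) (hab).
exists (gen a b (a + b) 0 0).
have := hp _ [::] (esym (cats0 _)).
have := countEN (gen a b (a + b) 0 0); rewrite gen_size.
rewrite !add0n => hs [h1 h2].
have hX : count isE (gen a b (a + b) 0 0) = a by nia.
have hY : count isN (gen a b (a + b) 0 0) = b by nia.
split; first exact hX. split; first exact hY. move=> p s hps.
have := hp p s hps; rewrite !add0n => -[h3 h4]; by split.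
Qed.

Lemma morph_cons f l w : morph f (l :: w) = f l ++ morph f w.
Proof. by []. Qed.

Lemma morph_prefix f w p s : morph f w = p ++ s ->
  (exists w1 w2, w = w1 ++ w2 /\ p = morph f w1) \/
  (exists w1 l w3 t, w = w1 ++ l :: w3 /\ t < size (f l) /\
      p = morph f w1 ++ take t (f l)).
Proof.
elim: w p s => [|l w IH] p s /=.
  by case: p => // _; left; exists [::], [::].
rewrite morph_cons => H.
have Hp : p = take (size p) (f l ++ morph f w) by rewrite H take_size_cat.
case: (ltnP (size p) (size (f l))) => hs.
  right; exists [::], l, w, (size p); split=> //; split=> //.
  by rewrite /= {1}Hp take_cat hs.
have e1 : take (size (f l)) p = f l.
  by rewrite -(takel_cat s hs) -H take_size_cat.
have e2 : morph f w = drop (size (f l)) p ++ s.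
  have := f_equal (drop (size (f l))) H.
  rewrite -{1}(cat_take_drop (size (f l)) p) e1 -catA !drop_size_cat //.
case: (IH _ _ e2) => [[w1 [w2 [ew ep]]] | [w1 [l' [w3 [t [ew [ht ep]]]]]]].
  left; exists (l :: w1), w2; rewrite ew; split=> //.
  by rewrite morph_cons -ep -{1}e1 cat_take_drop.
right; exists (l :: w1), l', w3, t; rewrite ew; split=> //; split=> //.
by rewrite morph_cons -catA -ep -{1}e1 cat_take_drop.
Qed.

Lemma lambda_countE s w :
  count isE (lambda s.+2 w) = s.+1 * count isE w + s * count isN w.
Proof.
elim: w => [|l w IH]; first by rewrite /= ?muln0.
case: l; rewrite /lambda morph_cons count_cat -/(lambda _ w) IH
  /= -cats1 count_cat count_nseq /=; lia.
Qed.

Lemma lambda_countN s w :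
  count isN (lambda s.+2 w) = count isE w + count isN w.
Proof.
elim: w => [|l w IH]; first by rewrite /= ?muln0.
case: l; rewrite /lambda morph_cons count_cat -/(lambda _ w) IH
  /= -cats1 count_cat count_nseq /=; lia.
Qed.

Lemma theta_countE w : count isE (theta w) = count isE w + count isN w.
Proof.
elim: w => [|l w IH]; first by rewrite /= ?muln0.
case: l; rewrite /theta morph_cons count_cat -/(theta w) IH /=; lia.
Qed.

Lemma theta_countN w : count isN (theta w) = count isN w.
Proof.
elim: w => [|l w IH]; first by rewrite /= ?muln0.
case: l; rewrite /theta morph_cons count_cat -/(theta w) IH /=; lia.
Qed.

Lemma take_rcons_nseq t k : t <= k -> take t (rcons (nseq k E) N) = nseq t E.
Proof.
move=> h; rewrite -cats1 takel_cat ?size_nseq // take_nseq //.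
Qed.

Lemma lambda_good s a b w : good a b w ->
  good (s.+1 * a + s * b) (a + b) (lambda s.+2 w).
Proof.
move=> [hE [hN hp]]; split; first by rewrite lambda_countE hE hN.
split; first by rewrite lambda_countN hE hN.
move=> p t ht.
case: (morph_prefix _ _ _ _ ht) => [[w1 [w2 [ew ep]]] | [w1 [l [w3 [t0 [ew [ht0 ep]]]]]]].
  have := hp w1 w2 ew; rewrite /inv ep -/(lambda _ w1) lambda_countE lambda_countN.
  move=> [h1 h2]; split; nia.
have := hp w1 (l :: w3) ew.
have ew' : w = rcons w1 l ++ w3 by rewrite ew -cats1 -catA.
have := hp (rcons w1 l) w3 ew'.
rewrite /inv ep -/(lambda _ w1) -!cats1 !count_cat lambda_countE lambda_countN.
clear ew ew' ht; case: l ht0 ep => ht0 ep.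
  change (lambda_img s.+2 E) with (rcons (nseq s.+1 E) N) in ht0.
  change (lambda_img s.+2 E) with (rcons (nseq s.+1 E) N) in ep.
  rewrite size_rcons size_nseq in ht0.
  case: (leqP t0 s) => hts.
    rewrite take_rcons_nseq ?count_nseq /=; last by lia.
    move=> _ [h1 h2]; split; nia.
  have -> : t0 = s.+1 by lia.
  rewrite take_rcons_nseq ?count_nseq //=.
  move=> [h3 h4] [h1 h2]; split; nia.
change (lambda_img s.+2 N) with (rcons (nseq s E) N) in ht0.
change (lambda_img s.+2 N) with (rcons (nseq s E) N) in ep.
rewrite size_rcons size_nseq in ht0.
rewrite take_rcons_nseq ?count_nseq /=; last by lia.
move=> _ [h1 h2]; split; nia.
Qed.

Lemma theta_good a b w : good a b w -> good (a + b) b (theta w).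
Proof.
move=> [hE [hN hp]]; split; first by rewrite theta_countE hE hN.
split; first by rewrite theta_countN hN.
move=> p t ht.
case: (morph_prefix _ _ _ _ ht) => [[w1 [w2 [ew ep]]] | [w1 [l [w3 [t0 [ew [ht0 ep]]]]]]].
  have := hp w1 w2 ew; rewrite /inv ep -/(theta w1) theta_countE theta_countN.
  move=> [h1 h2]; split; nia.
have := hp w1 (l :: w3) ew.
rewrite /inv ep -/(theta w1) !count_cat theta_countE theta_countN.
clear ew ht; case: l ht0 ep => /= ht0 ep; case: t0 ht0 ep => [|[|t0]] //= _ _;
  move=> [h1 h2]; split; nia.
Qed.

Lemma theta_inj u1 u2 : theta u1 = theta u2 -> u1 = u2.
Proof.
elim: u1 u2 => [|l1 u1 IH] [|l2 u2] //; rewrite /theta ?morph_cons -?/(theta _).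
- by case: l2.
- by case: l1.
case: l1; case: l2 => /= h.
- by case: h => /IH ->.
- move: h; case: u1 IH => [|[] u1] IH //=.
- move: h; case: u2 => [|[] u2] //=.
- by case: h => /IH ->.
Qed.

Lemma c_vals r k : 2 <= r -> exists u v, u < v /\ c r k.+1 = u /\
  c r k.+2 = v /\ c r k.+3 = r * v - u.
Proof.
move=> hr.
have hi : forall k, (cpair r k).1 < (cpair r k).2.
  elim=> [|j IH] //=; move: IH; case: (cpair r j) => a b /= h; nia.
exists (cpair r k).1, (cpair r k).2; split; first exact: hi.
split; first by [].
rewrite /c /=; case: (cpair r k) => a b /=; split; by [].
Qed.

Theorem mainTheorem3 (r n : nat) (hr : 2 <= r) (hn : 3 <= n) :
  ((exists w, is_christoffel_D r n w) /\
   (forall w, is_christoffel_D r n w -> is_christoffel_D r n.+1 (lambda r w)))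
  /\
  ((exists w u, is_christoffel_C r n w /\ w = theta u) /\
   (forall w u, is_christoffel_C r n w -> w = theta u ->
      is_christoffel_C r n.+1 (theta (lambda r u)))).
Proof.
case: n hn => [|[|[|k]]] // _.
have [u [v [huv [e1 [e2 e3]]]]] := c_vals r k hr.
case: r hr e1 e2 e3 => [|[|s]] // _ e1 e2 e3.
have hD : forall w, is_christoffel_D s.+2 k.+3 w <-> maximal_dyck (v-u) u w.
  by move=> w; rewrite /is_christoffel_D e2 e1.
have hD' : forall w, is_christoffel_D s.+2 k.+4 w <->
    maximal_dyck (s.+2*v - u - v) v w.
  by move=> w; rewrite /is_christoffel_D e3 e2.
have hC : forall w, is_christoffel_C s.+2 k.+3 w <-> maximal_dyck v u w.
  by move=> w; rewrite /is_christoffel_C e2 e1.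
have hC' : forall w, is_christoffel_C s.+2 k.+4 w <->
    maximal_dyck (s.+2*v - u) v w.
  by move=> w; rewrite /is_christoffel_C e3 e2.
have hpos : 0 < v - u + u by lia.
have [w0 g0] := exists_good (v - u) u hpos.
have gl : good (s.+2*v - u - v) v (lambda s.+2 w0).
  have := lambda_good s _ _ _ g0; rewrite (subnK (ltnW huv)).
  have [d ed] : exists d, v = u + d by exists (v - u); lia.
  rewrite ed addKn.
  have E0 : s.+1 * d + s * u + (u + (u + d)) = s.+2 * (u + d) by lia.
  by rewrite -subnDA -E0 addnK.
have gt : good v u (theta w0).
  by have := theta_good _ _ _ g0; rewrite (subnK (ltnW huv)).
have gtl : good (s.+2*v - u) v (theta (lambda s.+2 w0)).
  have := theta_good _ _ _ gl.
  have -> : s.+2 * v - u - v + v = s.+2 * v - u by lia.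
  done.
split; split.
- by exists w0; apply/hD/good_maximal.
- move=> w /hD hw; rewrite (maximal_unique _ _ _ _ hw (good_maximal _ _ _ g0)).
  by apply/hD'/good_maximal.
- by exists (theta w0), w0; split => //; apply/hC/good_maximal.
- move=> w u' /hC hw ew.
  have := maximal_unique _ _ _ _ hw (good_maximal _ _ _ gt); rewrite ew => /(theta_inj _ _) ->.
  by apply/hC'/good_maximal.
Qed.
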